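(* Let $\mathbb{C}$ be a modified category of interest and let $\mathcal{A}$, $\mathcal{B}$ be simplicial objects in $\mathbb{C}$ with Moore complex of length one which are homotopy equivalent, i.e. there are simplicial maps $f\colon\mathcal{A}\to\mathcal{B}$ and $g\colon\mathcal{B}\to\mathcal{A}$ with simplicial homotopies $g\circ f\simeq\mathrm{id}_{\mathcal{A}}$ and $f\circ g\simeq\mathrm{id}_{\mathcal{B}}$. Then the crossed modules $X_1(\mathcal{A})$ and $X_1(\mathcal{B})$ are homotopy equivalent, i.e. $X_1(g)\circ X_1(f)$ is homotopic to the identity of $X_1(\mathcal{A})$ and $X_1(f)\circ X_1(g)$ is homotopic to the identity of $X_1(\mathcal{B})$.
   Context: A modified category of interest (MCI) is a category $\mathbb{C}$ of groups (written additively) with additional unary and binary operations: $\Omega=\Omega_0\cup\Omega_1\cup\Omega_2$, $\Omega_0=\{0\}$, $\Omega_2'=\Omega_2\setminus\{+\}$ closed under $x*^\circ y=y*x$, with $x*(y+z)=x*y+x*z$, unary operations other than $-$ compatible with $+$ and $*$, $x_1+(x_2*x_3)=(x_2*x_3)+x_1$ for $*\in\Omega_2'$, and each $(x_1*x_2)\bar*x_3$ expressible as a word in the products $x_i(x_jx_k),(x_jx_k)x_i$, $i\in\{1,2\}$. A derived action of $R$ on $E$ consists of maps $r\cdot e=\sigma(r)+e-\sigma(r)$, $r*e=\sigma(r)*e$ ($*\in\Omega_2'$) induced by a split extension of $R$ by $E$ with section $\sigma$. A crossed module is a morphism $\partial\colon E\to R$ with a derived action satisfying $\partial(r\cdot e)=r+\partial(e)-r$,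 $\partial(r*e)=r*\partial(e)$, $\partial(e)\cdot e'=e+e'-e$, $\partial(e)*e'=e*e'$. A crossed module morphism $(f_1,f_0)$ satisfies $\partial'f_1=f_0\partial$, $f_1(r\cdot e)=f_0(r)\cdot f_1(e)$, $f_1(r*e)=f_0(r)*f_1(e)$. For a morphism $f_0\colon R\to R'$, an $f_0$-derivation is a map $s\colon R\to E'$ with $s(g+h)=\big(f_0(-h)\cdot s(g)\big)+s(h)$ and $s(g*h)=f_0(g)*s(h)+f_0(h)*^\circ s(g)+s(g)*s(h)$; two crossed module morphisms $(f_1,f_0),(g_1,g_0)$ are homotopic if there is an $f_0$-derivation $s$ with $g_0=f_0+\partial'\circ s$ and $g_1=f_1+s\circ\partial$. A simplicial object $\mathcal{A}$ in $\mathbb{C}$ consists of objects $A_n$ ($n\ge0$), faces $d_i\colon A_n\to A_{n-1}$ ($0\le i\le n$), degeneracies $s_j\colon A_n\to A_{n+1}$ ($0\le j\le n$) satisfying the usual simplicial identities; simplicial maps commute with faces and degeneracies. The Moore complex has $NA_0=A_0$, $NA_n=\bigcap_{i=0}^{n-1}\operatorname{Ker}d_i$ ($n\ge1$); it has length one if $NA_n=0$ for $n\ge2$. A simplicial homotopy from $f$ to $g$ is a family $h_i^n\colon A_n\to B_{n+1}$, $0\le i\le n$, with $d_0h_0=f$, $d_{n+1}h_n=g$, $d_ih_j=h_{j-1}d_i$ ($i<j$), $d_{j+1}h_{j+1}=d_{j+1}h_j$, $d_ih_j=h_jd_{i-1}$ ($i>j+1$), $s_ih_j=h_{j+1}s_i$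 ($i\le j$), $s_ih_j=h_js_{i-1}$ ($i>j$). The functor $X_1$ sends a simplicial object $\mathcal{A}$ with Moore complex of length one to the crossed module $d_1|\colon\operatorname{Ker}(d_0\colon A_1\to A_0)\to A_0$ with action $r\cdot e=s_0(r)+e-s_0(r)$, $r*e=s_0(r)*e$, and a simplicial map $f$ to $(f_1|_{\operatorname{Ker}d_0},f_0)$. *)

(* Defs.v *)
From Stdlib Require Import Arith Lia.
Set Implicit Arguments.
Unset Strict Implicit.

(* Signature Omega: Omega_0 = {0}, Omega_1 = {-} U Un, Omega_2 = {+} U Bin
   (Bin = Omega_2'), with the involution * |-> *^o on Omega_2'.         *)
Record signature := Signature {
  Un : Type;
  Bin : Type;
  circ : Bin -> Bin
}.

Record OGroup (S : signature) := OGroupPack {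
  car :> Type;
  oadd : car -> car -> car;
  oopp : car -> car;
  ozero : car;
  uop : Un S -> car -> car;
  bop : Bin S -> car -> car -> car
}.
Arguments oadd {S o} _ _.
Arguments oopp {S o} _.
Arguments ozero {S o}.
Arguments uop {S o} _ _.
Arguments bop {S o} _ _ _.

Definition mci_axioms (S : signature) (A : OGroup S) : Prop :=
  (forall x y z : A, oadd x (oadd y z) = oadd (oadd x y) z) /\
  (forall x : A, oadd ozero x = x) /\
  (forall x : A, oadd x ozero = x) /\
  (forall x : A, oadd (oopp x) x = ozero) /\
  (forall x : A, oadd x (oopp x) = ozero) /\
  (forall (b : Bin S) (x y : A), bop (circ b) x y = bop b y x) /\
  (forall (b : Bin S) (x y z : A), bop b x (oadd y z) = oadd (bop b x y) (bop b x z)) /\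
  (forall (u : Un S) (x y : A), uop u (oadd x y) = oadd (uop u x) (uop u y)) /\
  (forall (u : Un S) (b : Bin S) (x y : A), uop u (bop b x y) = bop b (uop u x) y) /\
  (forall (b : Bin S) (x1 x2 x3 : A), oadd x1 (bop b x2 x3) = oadd (bop b x2 x3) x1).

(* Words in the products x_i (x_j x_k), (x_j x_k) x_i, i in {1,2},
   {j,k} = {1,2,3} \ {i} (both orders), built with the group operations. *)
Inductive gword (S : signature) :=
  | wzero : gword S
  | wadd : gword S -> gword S -> gword S
  | wopp : gword S -> gword S
  | watom : bool (* i = 2 ? (else i = 1) *) ->
            bool (* swap j,k ? *) ->
            bool (* x_i on the left ? *) ->
            Bin S (* outer operation *) -> Bin S (* inner operation *) -> gword S.
Arguments wzero {S}.

Fixpoint weval (S : signature) (A : OGroup S) (w : gword S) (x1 x2 x3 : A) : A :=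
  match w with
  | wzero => ozero
  | wadd v w => oadd (weval v x1 x2 x3) (weval w x1 x2 x3)
  | wopp v => oopp (weval v x1 x2 x3)
  | watom i2 sw lft b c =>
      let xi := if i2 then x2 else x1 in
      let p := if i2 then x1 else x2 in
      let q := x3 in
      let inner := if sw then bop c q p else bop c p q in
      if lft then bop b xi inner else bop b inner xi
  end.

(* A modified category of interest: a (full) category of Omega-groups,
   given by its class of objects, all satisfying the axioms, together with
   the uniform "word" axiom for (x1 * x2) *bar x3. *)
Record MCI := MkMCI {
  msig :> signature;
  inC : OGroup msig -> Prop;
  inC_axioms : forall A, inC A -> mci_axioms A;
  inC_words : forall b c : Bin msig, exists w : gword msig,
      forall A, inC A -> forall x1 x2 x3 : A,
        bop c (bop b x1 x2) x3 = weval w x1 x2 x3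
}.

Definition ohom (S : signature) (A B : OGroup S) (f : A -> B) : Prop :=
  (forall x y : A, f (oadd x y) = oadd (f x) (f y)) /\
  (forall (u : Un S) (x : A), f (uop u x) = uop u (f x)) /\
  (forall (b : Bin S) (x y : A), f (bop b x y) = bop b (f x) (f y)).

(* Simplicial objects in C.  face n i : A_{n+1} -> A_n is d_i (0 <= i <= n+1),
   degen n j : A_n -> A_{n+1} is s_j (0 <= j <= n).  Values at out-of-range
   indices are irrelevant. *)
Unset Implicit Arguments.
Record sobj (C : MCI) := MkSobj {
  ob : nat -> OGroup C;
  ob_in : forall n, inC (ob n);
  face : forall n, nat -> ob (S n) -> ob n;
  degen : forall n, nat -> ob n -> ob (S n);
  face_hom : forall n i, i <= S n -> ohom (face n i);
  degen_hom : forall n j, j <= n -> ohom (degen n j);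
  dd : forall n i j (x : ob (S (S n))), i < j -> j <= S (S n) ->
         face n i (face (S n) j x) = face n (j - 1) (face (S n) i x);
  ds_lt : forall n i j (x : ob (S n)), i < j -> j <= S n ->
         face (S n) i (degen (S n) j x) = degen n (j - 1) (face n i x);
  ds_eq : forall n j (x : ob n), j <= n -> face n j (degen n j x) = x;
  ds_eq1 : forall n j (x : ob n), j <= n -> face n (S j) (degen n j x) = x;
  ds_gt : forall n i j (x : ob (S n)), S j < i -> i <= S (S n) ->
         face (S n) i (degen (S n) j x) = degen n j (face n (i - 1) x);
  ss : forall n i j (x : ob n), i <= j -> j <= n ->
         degen (S n) i (degen n j x) = degen (S n) (S j) (degen n i x)
}.
Set Implicit Arguments.
Arguments ob {C} _ _.
Arguments face {C} _ _ _ _.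
Arguments degen {C} _ _ _ _.

(* Moore complex of length one: NA_n = 0 for n >= 2, where
   NA_n = intersection of Ker d_i, 0 <= i <= n-1. *)
Definition moore_length_one (C : MCI) (A : sobj C) : Prop :=
  forall n (x : ob A (S (S n))),
    (forall i, i < S (S n) -> face A (S n) i x = ozero) -> x = ozero.

Definition is_smap (C : MCI) (A B : sobj C) (f : forall n, ob A n -> ob B n) : Prop :=
  (forall n, ohom (f n)) /\
  (forall n i (x : ob A (S n)), i <= S n -> f n (face A n i x) = face B n i (f (S n) x)) /\
  (forall n j (x : ob A n), j <= n -> f (S n) (degen A n j x) = degen B n j (f n x)).

Definition shomotopy (C : MCI) (A B : sobj C) (F G : forall n, ob A n -> ob B n) : Prop :=
  exists h : forall n, nat -> ob A n -> ob B (S n),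
    (forall n j, j <= n -> ohom (h n j)) /\
    (forall n (x : ob A n), face B n 0 (h n 0 x) = F n x) /\
    (forall n (x : ob A n), face B n (S n) (h n n x) = G n x) /\
    (forall n i j (x : ob A (S n)), i < j -> j <= S n ->
        face B (S n) i (h (S n) j x) = h n (j - 1) (face A n i x)) /\
    (forall n j (x : ob A n), S j <= n ->
        face B n (S j) (h n (S j) x) = face B n (S j) (h n j x)) /\
    (forall n i j (x : ob A (S n)), S j < i -> i <= S (S n) ->
        face B (S n) i (h (S n) j x) = h n j (face A n (i - 1) x)) /\
    (forall n i j (x : ob A n), i <= j -> j <= n ->
        degen B (S n) i (h n j x) = h (S n) (S j) (degen A n i x)) /\
    (forall n i j (x : ob A n), j < i -> i <= S n ->
        degen B (S n) i (h n j x) = h (S n) j (degen A n (i - 1) x)).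

(* Crossed-module data: the object E is given as a subobject (predicate
   xE) of an ambient Omega-group xEamb. *)
Record xmod (S : signature) := MkXmod {
  xEamb : OGroup S;
  xE : xEamb -> Prop;
  xR : OGroup S;
  xd : xEamb -> xR;
  xact : xR -> xEamb -> xEamb;
  xbact : Bin S -> xR -> xEamb -> xEamb
}.
Arguments xEamb {S} _.
Arguments xE {S} _ _.
Arguments xR {S} _.
Arguments xd {S} _ _.
Arguments xact {S} _ _ _.
Arguments xbact {S} _ _ _ _.

(* Crossed-module morphisms (f_1, f_0); f_1 is only relevant on E. *)
Record xhom (S : signature) (X Y : xmod S) := MkXhom {
  xh1 : xEamb X -> xEamb Y;
  xh0 : xR X -> xR Y
}.
Arguments xh1 {S X Y} _ _.
Arguments xh0 {S X Y} _ _.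

Definition xcomp (S : signature) (X Y Z : xmod S) (G : xhom Y Z) (F : xhom X Y) : xhom X Z :=
  @MkXhom S X Z (fun e => xh1 G (xh1 F e)) (fun r => xh0 G (xh0 F r)).

Definition xid (S : signature) (X : xmod S) : xhom X X :=
  @MkXhom S X X (fun e => e) (fun r => r).

Definition derivation (S : signature) (X Y : xmod S) (f0 : xR X -> xR Y)
    (s : xR X -> xEamb Y) : Prop :=
  (forall r, xE Y (s r)) /\
  (forall g h : xR X, s (oadd g h) = oadd (xact Y (f0 (oopp h)) (s g)) (s h)) /\
  (forall (b : Bin S) (g h : xR X),
      s (bop b g h) =
      oadd (oadd (xbact Y b (f0 g) (s h)) (xbact Y (circ b) (f0 h) (s g)))
           (bop b (s g) (s h))).

Definition xhomotopic (S : signature) (X Y : xmod S) (F G : xhom X Y) : Prop :=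
  exists s : xR X -> xEamb Y,
    derivation (xh0 F) s /\
    (forall r, xh0 G r = oadd (xh0 F r) (xd Y (s r))) /\
    (forall e, xE X e -> xh1 G e = oadd (xh1 F e) (s (xd X e))).

Definition X1 (C : MCI) (A : sobj C) : xmod C :=
  MkXmod (xEamb := ob A 1) (xR := ob A 0)
    (fun e => face A 0 0 e = ozero)
    (face A 0 1)
    (fun r e => oadd (oadd (degen A 0 0 r) e) (oopp (degen A 0 0 r)))
    (fun b r e => bop b (degen A 0 0 r) e).

Definition X1map (C : MCI) (A B : sobj C) (f : forall n, ob A n -> ob B n)
  : xhom (X1 A) (X1 B) :=
  @MkXhom C (X1 A) (X1 B) (f 1) (f 0).

Arguments is_smap {C} A B f.
Arguments shomotopy {C} A B F G.
Arguments X1map {C} A B f.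
Arguments X1 {C} A.
Arguments moore_length_one {C} A.

(* Main.v *)
Require Import Defs.
Set Implicit Arguments.


Lemma gA {S : signature} {G : OGroup S} (H : mci_axioms G) (x y z : G) : oadd x (oadd y z) = oadd (oadd x y) z.
Proof. destruct H as (h&_); apply h. Qed.
Lemma g0l {S : signature} {G : OGroup S} (H : mci_axioms G) (x : G) : oadd ozero x = x.
Proof. destruct H as (_&h&_); apply h. Qed.
Lemma g0r {S : signature} {G : OGroup S} (H : mci_axioms G) (x : G) : oadd x ozero = x.
Proof. destruct H as (_&_&h&_); apply h. Qed.
Lemma gNl {S : signature} {G : OGroup S} (H : mci_axioms G) (x : G) : oadd (oopp x) x = ozero.
Proof. destruct H as (_&_&_&h&_); apply h. Qed.
Lemma gNr {S : signature} {G : OGroup S} (H : mci_axioms G) (x : G) : oadd x (oopp x) = ozero.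
Proof. destruct H as (_&_&_&_&h&_); apply h. Qed.
Lemma gcirc {S : signature} {G : OGroup S} (H : mci_axioms G) b (x y : G) : bop (circ b) x y = bop b y x.
Proof. destruct H as (_&_&_&_&_&h&_); apply h. Qed.
Lemma gDr {S : signature} {G : OGroup S} (H : mci_axioms G) b (x y z : G) : bop b x (oadd y z) = oadd (bop b x y) (bop b x z).
Proof. destruct H as (_&_&_&_&_&_&h&_); apply h. Qed.
Lemma gDl {S : signature} {G : OGroup S} (H : mci_axioms G) b (x y z : G) : bop b (oadd x y) z = oadd (bop b x z) (bop b y z).
Proof. rewrite <- (gcirc H b z (oadd x y)), <- (gcirc H b z x), <- (gcirc H b z y). apply (gDr H). Qed.
Lemma gKl {S : signature} {G : OGroup S} (H : mci_axioms G) (x y : G) : oadd (oopp x) (oadd x y) = y.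
Proof. rewrite (gA H), (gNl H), (g0l H). reflexivity. Qed.
Lemma gKr {S : signature} {G : OGroup S} (H : mci_axioms G) (x y : G) : oadd x (oadd (oopp x) y) = y.
Proof. rewrite (gA H), (gNr H), (g0l H). reflexivity. Qed.
Lemma gsolve {S : signature} {G : OGroup S} (H : mci_axioms G) (x y : G) : oadd x y = ozero -> x = oopp y.
Proof. intro E. rewrite <- (g0r H x), <- (gNr H y), (gA H), E, (g0l H). reflexivity. Qed.
Lemma gidem {S : signature} {G : OGroup S} (H : mci_axioms G) (x : G) : oadd x x = x -> x = ozero.
Proof. intro E. rewrite <- (gKl H x x), E, (gNl H). reflexivity. Qed.
Lemma gNN {S : signature} {G : OGroup S} (H : mci_axioms G) (x : G) : oopp (oopp x) = x.
Proof. symmetry. apply (gsolve H). apply (gNr H). Qed.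
Lemma gND {S : signature} {G : OGroup S} (H : mci_axioms G) (x y : G) : oopp (oadd x y) = oadd (oopp y) (oopp x).
Proof. symmetry. apply (gsolve H). rewrite <- (gA H), (gA H (oopp x)), (gNl H), (g0l H), (gNl H). reflexivity. Qed.
Lemma gb0 {S : signature} {G : OGroup S} (H : mci_axioms G) b (x : G) : bop b x ozero = ozero.
Proof. apply (gidem H). rewrite <- (gDr H), (g0l H). reflexivity. Qed.
Lemma gbN {S : signature} {G : OGroup S} (H : mci_axioms G) b (x y : G) : bop b x (oopp y) = oopp (bop b x y).
Proof. apply (gsolve H). rewrite <- (gDr H), (gNl H). apply (gb0 H). Qed.
Lemma g0b {S : signature} {G : OGroup S} (H : mci_axioms G) b (x : G) : bop b ozero x = ozero.
Proof. rewrite <- (gcirc H b x ozero). apply (gb0 H). Qed.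
Lemma gN0 {S : signature} {G : OGroup S} (H : mci_axioms G) : oopp (ozero : G) = ozero.
Proof. symmetry. apply (gsolve H). apply (g0l H). Qed.

Lemma gderiv1 {S : signature} {G : OGroup S} (H : mci_axioms G) (p q u v : G) : oadd (oopp (oadd p q)) (oadd u v) =
  oadd (oadd (oadd (oopp q) (oadd (oopp p) u)) (oopp (oopp q))) (oadd (oopp q) v).
Proof.
  rewrite (gNN H), (gND H). rewrite <- !(gA H). f_equal. f_equal. f_equal. symmetry; apply (gKr H).
Qed.
Lemma gderiv2 {S : signature} {G : OGroup S} (H : mci_axioms G) b (P Q U V : G) : oadd (oopp (bop b P Q)) (bop b U V) =
  oadd (oadd (bop b P (oadd (oopp Q) V)) (bop (circ b) Q (oadd (oopp P) U)))
       (bop b (oadd (oopp P) U) (oadd (oopp Q) V)).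
Proof.
  rewrite (gcirc H). rewrite <- (gA H), <- (gDr H), (gKr H).
  rewrite (gDr H), (gbN H), (gDl H), <- (gA H), (gA H (bop b P V)), <- (gDl H), (gNr H), (g0b H), (g0l H).
  reflexivity.
Qed.

Lemma homD {S} {A B : OGroup S} {f : A -> B} : ohom f -> forall x y, f (oadd x y) = oadd (f x) (f y).
Proof. intros [h _]; apply h. Qed.
Lemma hom0 {S} {A B : OGroup S} {f : A -> B} : mci_axioms A -> mci_axioms B -> ohom f -> f ozero = ozero.
Proof. intros HA HB [Hf _]. apply gidem; auto. rewrite <- Hf, g0l; auto. Qed.
Lemma homN {S} {A B : OGroup S} {f : A -> B} : mci_axioms A -> mci_axioms B -> ohom f -> forall x, f (oopp x) = oopp (f x).
Proof. intros HA HB Hf x. apply gsolve; auto. rewrite <- (homD Hf), gNl; auto. eapply hom0; eauto. Qed.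
Lemma homB {S} {A B : OGroup S} {f : A -> B} : ohom f -> forall b x y, f (bop b x y) = bop b (f x) (f y).
Proof. intros (_&_&h); apply h. Qed.

From Stdlib Require Import Lia.

Lemma half (C : MCI) (A B : sobj C)
  (f : forall n, ob A n -> ob B n) (g : forall n, ob B n -> ob A n) :
  moore_length_one A ->
  is_smap A B f -> is_smap B A g ->
  shomotopy A A (fun n x => g n (f n x)) (fun n x => x) ->
  xhomotopic (xcomp (X1map B A g) (X1map A B f)) (xid (X1 A)).
Proof.
  intros Hm [fh [ff fd]] [gh [gf gd]] [h [hh [h0 [h1 [hlt [heq [hgt _]]]]]]].
  assert (HA : forall n, mci_axioms (ob A n)) by (intro; apply inC_axioms, ob_in).
  assert (HB : forall n, mci_axioms (ob B n)) by (intro; apply inC_axioms, ob_in).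
  assert (Hgf : forall n, ohom (fun x => g n (f n x))).
  { intro n. destruct (fh n) as (a1&a2&a3), (gh n) as (b1&b2&b3).
    split; [|split]; intros; simpl; rewrite ?a1, ?a2, ?a3, ?b1, ?b2, ?b3; reflexivity. }
  assert (Hs00 : ohom (degen A 0 0)) by (apply degen_hom; auto).
  assert (Hh00 : ohom (h 0 0)) by (apply hh; auto).
  exists (fun r => oadd (oopp (degen A 0 0 (g 0 (f 0 r)))) (h 0 0 r)).
  simpl. split; [split; [|split]|split].
  - intro r. simpl.
    rewrite (homD (face_hom _ A 0 0 ltac:(auto))), (homN (HA 1) (HA 0) (face_hom _ A 0 0 ltac:(auto))).
    rewrite ds_eq by auto. rewrite h0. apply gNl; auto.
  - intros a b. simpl.
    rewrite (homD (fh 0)), (homD (gh 0)), (homD Hs00), (homD Hh00).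
    rewrite (homN (HA 0) (HB 0) (fh 0)), (homN (HB 0) (HA 0) (gh 0)), (homN (HA 0) (HA 1) Hs00).
    apply gderiv1; auto.
  - intros b x y. simpl.
    rewrite (homB (fh 0)), (homB (gh 0)), (homB Hs00), (homB Hh00).
    apply gderiv2; auto.
  - intro r. simpl.
    rewrite (homD (face_hom _ A 0 1 ltac:(auto))), (homN (HA 1) (HA 0) (face_hom _ A 0 1 ltac:(auto))).
    rewrite ds_eq1 by auto. rewrite h1. symmetry; apply gKr; auto.
  - intros e He. simpl.
    set (E := g 1 (f 1 e)).
    assert (HE0 : face A 0 0 E = ozero).
    { unfold E. rewrite <- gf, <- ff by auto. rewrite He.
      rewrite (hom0 (HA 0) (HB 0) (fh 0)). apply (hom0 (HB 0) (HA 0) (gh 0)). }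
    assert (HE1 : face A 0 1 E = g 0 (f 0 (face A 0 1 e))).
    { unfold E. rewrite <- gf, <- ff by auto. reflexivity. }
    set (x := oadd (oadd (oadd (degen A 1 0 E) (oopp (degen A 1 1 E))) (h 1 1 e)) (oopp (h 1 0 e))).
    assert (Hf0 := face_hom _ A 1 0 ltac:(auto)).
    assert (Hf1 := face_hom _ A 1 1 ltac:(auto)).
    assert (Hf2 := face_hom _ A 1 2 ltac:(auto)).
    assert (Hx : x = ozero).
    { apply Hm. intros i Hi. destruct i as [|[|i]]; [| |exfalso; lia].
      - unfold x. rewrite !(homD Hf0), !(homN (HA 2) (HA 1) Hf0).
        rewrite (ds_eq _ A 1 0) by auto. rewrite (ds_lt _ A 0 0 1) by auto.
        rewrite hlt by auto. simpl (1 - 1). rewrite h0, HE0, He.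
        rewrite (hom0 (HA 0) (HA 1) (degen_hom _ A 0 0 ltac:(auto))).
        rewrite (hom0 (HA 0) (HA 1) Hh00). fold E.
        rewrite (gN0 (HA 1)), (g0r (HA 1)), (g0r (HA 1)). apply gNr; auto.
      - unfold x. rewrite !(homD Hf1), !(homN (HA 2) (HA 1) Hf1).
        rewrite (ds_eq1 _ A 1 0) by auto. rewrite (ds_eq _ A 1 1) by auto.
        rewrite heq by auto. rewrite (gNr (HA 1)), (g0l (HA 1)). apply gNr; auto. }
    assert (Z := f_equal (face A 1 2) Hx). unfold x in Z.
    rewrite (hom0 (HA 2) (HA 1) Hf2), !(homD Hf2), !(homN (HA 2) (HA 1) Hf2) in Z.
    rewrite (ds_gt _ A 0 2 0) in Z by auto. rewrite (ds_eq1 _ A 1 1) in Z by auto.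
    rewrite h1 in Z. rewrite hgt in Z by auto. simpl (2 - 1) in Z. rewrite HE1 in Z.
    apply (gsolve (HA 1)) in Z. rewrite (gNN (HA 1)) in Z.
    rewrite <- Z, <- (gA (HA 1) (degen A 0 0 _)), (gKl (HA 1)), (gKr (HA 1)).
    reflexivity.
Qed.


Theorem mainTheorem7 (C : MCI) (A B : sobj C)
  (f : forall n, ob A n -> ob B n) (g : forall n, ob B n -> ob A n) :
  moore_length_one A -> moore_length_one B ->
  is_smap A B f -> is_smap B A g ->
  shomotopy A A (fun n x => g n (f n x)) (fun n x => x) ->
  shomotopy B B (fun n x => f n (g n x)) (fun n x => x) ->
  xhomotopic (xcomp (X1map B A g) (X1map A B f)) (xid (X1 A)) /\
  xhomotopic (xcomp (X1map A B f) (X1map B A g)) (xid (X1 B)).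
Proof.
  intros HmA HmB Hf Hg HgfA HfgB. split.
  - apply half; auto.
  - apply half; auto.
Qed.
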